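(* Let $n \geqslant 1$, let $\lambda$ be an integer partition with $\lambda_1+\ell(\lambda)-1=n$, and let $c \in \mathfrak{S}_{n+1}$ be a Coxeter element. Fix $k \in \{1,\ldots,n\}$ such that $s_k$ is final in $\mathsf{c}(\lambda)$, and $s_k$ is either initial or final in $c$. Then for every $a\in\mathbb{N}$ and every filling $f$ of $\lambda$, \[\mathcal{RSK}_{\lambda,c}(\mathrm{add}^a_{\lambda,k}(f)) = \mathrm{add}^a_{\lambda,k}(\mathcal{RSK}_{\lambda,c}(f)).\]
   Context: $s_i=(i,i+1)\in\mathfrak{S}_{n+1}$; $\ell(w)$ is the Coxeter length w.r.t. $\{s_1,\dots,s_n\}$. A Coxeter element is a product of $s_1,\dots,s_n$ each exactly once. $s$ is initial in $w$ if $\ell(sw)<\ell(w)$ and final in $w$ if $\ell(ws)<\ell(w)$. Ferrers diagram $\mathrm{Fer}(\lambda)=\{(i,j):j\le\lambda_i\}$. Row/column labels: label the unit segments of the south-east boundary of $\mathrm{Fer}(\lambda)$ by $1,\dots,n+1$ from top-right to bottom-left; rows and columns inherit labels; $\mathbf L$ = row labels, $\mathbf R$ = column labels; $[\ell,r]$ is the box with row label $\ell$ and column label $r$ (exists iff $\ell<r$). Every Coxeter element is a long cycle $(c_1=1<c_2<\dots<c_m=n+1>c_{m+1}>\dots>c_{n+1})$; $\mathsf{c}(\lambda)$ is the unique Coxeter element for which $\{c_2,\dots,c_{m-1}\}=\mathbf L\setminus\{1\}$ and $\{c_{m+1},\dots,c_{n+1}\}=\mathbf R\setminus\{n+1\}$.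 For $a\in\mathbb{N}$ and a filling $g$ of $\lambda$, $\mathrm{add}^a_{\lambda,k}(g)$ is the filling obtained from $g$ by adding $a$ to the value of the box $[k,k+1]$ only (under the hypothesis, $k\in\mathbf L$ and $k+1\in\mathbf R$). Diagonals $D_k(\lambda)=\{(i,j):\lambda_1+i-j=k\}$, $\delta_k=\max\{\min(i,j):(i,j)\in D_k(\lambda)\}$, $(i,j)\in D_k(\lambda)$ has coordinates $\langle k,\delta\rangle_\lambda$ with $\delta=\delta_k-\min(i,j)+1$. Greene–Kleitman: for acyclic $G$ and $g:G_0\to\mathbb{N}$, $M_t$ = max over $t$-tuples of (possibly one-vertex) directed paths of the sum of $g$ over the union of their vertices, $M_0=0$, $\mathrm{GK}_G(g)=(M_t-M_{t-1})_{t\ge1}$. $\mathrm{AR}(c)$ has vertices the transpositions $(i,j)$, $1\le i<j\le n+1$, arrows $(i,j)\to(i,c(j))$ if $i<c(j)$ and $(i,j)\to(c(i),j)$ if $c(i)<j$; $\mathrm{AR}^{[k]}(c)$ is the full subgraph on $(\ell,r)$, $\ell\le k<r$. $\mathrm{rep}_{\lambda,c}(f)(\ell,r)=f([\ell,r])$ if $\ell\in\mathbf L,r\in\mathbf R,\ell<r$, else $0$; $\mathcal{RSK}_{\lambda,c}(f)(\langle k,\delta\rangle_\lambda)$ is the $\delta$-th part of $\mathrm{GK}_{\mathrm{AR}^{[k]}(c)}$ of the restriction of $\mathrm{rep}_{\lambda,c}(f)$. *)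

(* Defs.v *)
From HB Require Import structures.
From mathcomp Require Import all_boot all_order all_fingroup.
Set Implicit Arguments. Unset Strict Implicit. Unset Printing Implicit Defensive.

Definition is_partition (la : seq nat) := sorted geq la && all (fun x => 0 < x) la.
Definition lam1 (la : seq nat) := head 0 la.
Definition part (la : seq nat) (i : nat) := nth 0 la i.-1.
Definition conjp (la : seq nat) (j : nat) := count (fun x => j <= x) la.
Definition in_Fer (la : seq nat) (i j : nat) :=
  (1 <= i <= size la) && (1 <= j <= part la i).

(* Labels of the south-east boundary, numbered 1..n+1 from top-right to
   bottom-left.  Row i ends with the vertical segment preceded by i-1 vertical
   and lambda_1 - lambda_i horizontal segments; column j is the horizontal
   segment preceded by lambda'_j vertical and lambda_1 - j horizontal ones. *)
Definition rowlab (la : seq nat) (i : nat) := i + lam1 la - part la i.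
Definition collab (la : seq nat) (j : nat) := conjp la j + (lam1 la - j) + 1.
Definition Llabels (la : seq nat) := [seq rowlab la i | i <- iota 1 (size la)].
Definition Rlabels (la : seq nat) := [seq collab la j | j <- iota 1 (lam1 la)].
Definition rowof (la : seq nat) (l : nat) := (index l (Llabels la)).+1.
Definition colof (la : seq nat) (r : nat) := (index r (Rlabels la)).+1.

(* fillings are functions on coordinates (only values on boxes matter) *)
Definition rep (la : seq nat) (f : nat -> nat -> nat) (l r : nat) : nat :=
  if [&& l \in Llabels la, r \in Rlabels la & l < r]
  then f (rowof la l) (colof la r) else 0.

Definition addk (la : seq nat) (k a : nat) (g : nat -> nat -> nat) (i j : nat) : nat :=
  if (i == rowof la k) && (j == colof la k.+1) then g i j + a else g i j.

(* ---------- Symmetric group S_{n+1}: labels 1..n+1 <-> ordinals 0..n ---------- *)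
(* mathcomp convention: (s * t) x = t (s x). *)
Definition sadj (n i : nat) : 'S_n.+1 := tperm (inord i.-1) (inord i).
Definition word_prod (n : nat) (w : seq nat) : 'S_n.+1 := (\prod_(i <- w) sadj n i)%g.
Definition coxeter_element (n : nat) (c : 'S_n.+1) :=
  exists w : seq nat, perm_eq w (iota 1 n) /\ c = word_prod n w.
Definition has_word (n : nat) (p : 'S_n.+1) (m : nat) :=
  exists w : seq nat, [/\ size w = m, all (fun i => 0 < i <= n) w & p = word_prod n w].
Definition is_coxlen (n : nat) (p : 'S_n.+1) (m : nat) :=
  has_word p m /\ forall m', has_word p m' -> m <= m'.
(* s initial in w : l(s o w) < l(w);  s o w (function composition) = w * s *)
Definition initial (n : nat) (s w : 'S_n.+1) :=
  exists m m', [/\ is_coxlen (w * s)%g m', is_coxlen w m & m' < m].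
(* s final in w : l(w o s) < l(w);  w o s = s * w *)
Definition final (n : nat) (s w : 'S_n.+1) :=
  exists m m', [/\ is_coxlen (s * w)%g m', is_coxlen w m & m' < m].
Definition pfun (n : nat) (c : 'S_n.+1) (x : nat) : nat := (c (inord x.-1)).+1.

(* c(lambda): the long cycle (1 < ... < n+1 > ...) with increasing part the
   row labels and decreasing part the column labels *)
Definition cycle_seq (la : seq nat) :=
  sort leq (Llabels la) ++ rev (sort leq (Rlabels la)).
Definition cycle_ord (n : nat) (la : seq nat) : seq 'I_n.+1 :=
  [seq inord x.-1 | x <- cycle_seq la].
Definition clam (n : nat) (la : seq nat) : 'S_n.+1 :=
  match @idP (uniq (cycle_ord n la)) with
  | ReflectT h => perm (can_inj (prev_next h))
  | ReflectF _ => 1%g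
  end.

Definition is_path_set (T : finType) (Vp : pred T) (E : rel T) (S : {set T}) : bool :=
  [exists m : 'I_#|T|.+1, exists s : m.-tuple T,
     [&& 0 < m, uniq s, all Vp s, sorted E s & S == [set x in s]]].
Definition GK_M (T : finType) (Vp : pred T) (E : rel T) (g : T -> nat) (t : nat) : nat :=
  \max_(F : {ffun 'I_t -> {set T}} | [forall i, is_path_set Vp E (F i)])
     \sum_(v in \bigcup_(i < t) F i) g v.
Definition GK_part (T : finType) (Vp : pred T) (E : rel T) (g : T -> nat) (d : nat) : nat :=
  GK_M Vp E g d - GK_M Vp E g d.-1.

(* vertices: pairs of labels (l,r), stored as ordinals < n+2 *)
Definition vtx (n : nat) := ('I_n.+2 * 'I_n.+2)%type.
Definition ARk_vert (n k : nat) (v : vtx n) : bool :=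
  [&& 1 <= v.1, v.1 <= k, k < v.2 & v.2 <= n.+1].
Definition AR_arrow (n : nat) (c : 'S_n.+1) (u v : vtx n) : bool :=
  [&& (v.1 : nat) == u.1, (v.2 : nat) == pfun c u.2 & u.1 < pfun c u.2]
  || [&& (v.2 : nat) == u.2, (v.1 : nat) == pfun c u.1 & pfun c u.1 < u.2].
Definition ARk_edge (n : nat) (c : 'S_n.+1) (k : nat) (u v : vtx n) : bool :=
  [&& ARk_vert k u, ARk_vert k v & AR_arrow c u v].

Definition boxes (la : seq nat) :=
  [seq (i, j) | i <- iota 1 (size la), j <- iota 1 (part la i)].
Definition diag (la : seq nat) (i j : nat) := lam1 la + i - j.
Definition delta_max (la : seq nat) (k : nat) :=
  \max_(p <- boxes la | diag la p.1 p.2 == k) minn p.1 p.2.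
Definition RSK (n : nat) (la : seq nat) (c : 'S_n.+1) (f : nat -> nat -> nat)
    (i j : nat) : nat :=
  let k := diag la i j in
  let d := delta_max la k - minn i j + 1 in
  GK_part (@ARk_vert n k) (ARk_edge c k) (fun v : vtx n => rep la f v.1 v.2) d.

(* Main.v *)
Require Import Defs.
From HB Require Import structures.
From mathcomp Require Import all_boot all_order all_fingroup.
From mathcomp Require Import zify.
Set Implicit Arguments. Unset Strict Implicit. Unset Printing Implicit Defensive.

Section Perm.
Variable n : nat.
Implicit Types (p q : 'S_n.+1) (x y : 'I_n.+1).

Definition presb p (j : nat) := [forall x : 'I_n.+1, (x < j) ==> (p x < j)].

Lemma presP p j : reflect (forall x : 'I_n.+1, x < j -> p x < j) (presb p j).
Proof. by apply: (iffP forallP) => H x; [move=> hx; move/implyP: (H x); apply|apply/implyP/H]. Qed.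

Lemma pres_mul p q j : presb p j -> presb q j -> presb (p * q) j.
Proof. move=> /presP hp /presP hq; apply/presP => x hx; rewrite permM; exact/hq/hp. Qed.

Lemma pres_inv p j : presb p j -> presb p^-1 j.
Proof.
move=> /presP hp; apply/presP => y hy.
pose A := [set x : 'I_n.+1 | x < j].
have sub : p @: A \subset A.
  by apply/subsetP => z /imsetP [x]; rewrite !inE => hx ->; apply: hp.
have eqA : p @: A = A.
  by apply/eqP; rewrite eqEcard sub (card_imset _ (@perm_inj _ p)) leqnn.
have : y \in p @: A by rewrite eqA inE.
by case/imsetP => x; rewrite inE => hx ->; rewrite permK.
Qed.

Lemma pres_ge p j x : presb p j -> j <= x -> j <= p x.
Proof.
move=> /pres_inv /presP hp hx; rewrite leqNgt; apply/negP => /hp.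
by rewrite permK ltnNge hx.
Qed.

Lemma inordv (m : nat) : m <= n -> nat_of_ord (inord m : 'I_n.+1) = m.
Proof. move=> h; exact: inordK h. Qed.

Lemma sadjE i x : 1 <= i <= n ->
  nat_of_ord (sadj n i x) = if nat_of_ord x == i.-1 then i else if nat_of_ord x == i then i.-1 else nat_of_ord x.
Proof.
move=> /andP [h1 h2]; rewrite /sadj.
case: tpermP => [->|->|/eqP hx /eqP hy].
- by rewrite !inordv ?eqxx; lia.
- rewrite !inordv; try lia.
  have -> : (i == i.-1) = false by apply/eqP; lia.
  by rewrite eqxx.
- rewrite -(inj_eq val_inj) /= inordv in hx; last lia.
  rewrite -(inj_eq val_inj) /= inordv in hy; last lia.
  by rewrite (negbTE hx) (negbTE hy).
Qed.

Lemma pres_sadj i j : 1 <= i <= n -> i != j -> presb (sadj n i) j.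
Proof.
move=> hi hij; apply/presP => x hx; rewrite sadjE //.
case: ifP => [/eqP e|_]; first by move: hij hx; rewrite e; lia.
case: ifP => [/eqP e|_] //; lia.
Qed.

Lemma pres1 j : presb 1 j.
Proof. by apply/presP => x; rewrite perm1. Qed.

Lemma pres_word w j : all (fun i => (0 < i <= n) && (i != j)) w -> presb (word_prod n w) j.
Proof.
elim: w => [|i w IH] /=; first by rewrite /word_prod big_nil pres1.
case/andP => /andP [hi hij] hw; rewrite /word_prod big_cons.
by apply: pres_mul; [apply: pres_sadj | apply: IH].
Qed.


Lemma pres_exp p j t : presb p j -> presb (p ^+ t) j.
Proof.
move=> h; elim: t => [|t IH]; first by rewrite expg0 pres1.
by rewrite expgS pres_mul.
Qed.

Lemma cox_word c : coxeter_element c ->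
  exists w, [/\ uniq w, all (fun i => 0 < i <= n) w, size w = n, c = word_prod n w
     & forall j, 0 < j <= n -> j \in w].
Proof.
case=> w [hw ->]; exists w; split => //.
- by rewrite (perm_uniq hw) iota_uniq.
- apply/allP => i; rewrite (perm_mem hw) mem_iota; lia.
- by rewrite (perm_size hw) size_iota.
- by move=> j hj; rewrite (perm_mem hw) mem_iota; lia.
Qed.

Lemma cox_split c j : coxeter_element c -> 1 <= j <= n ->
  exists P1 P2, [/\ presb P1 j, presb P2 j & c = (P1 * sadj n j * P2)%g].
Proof.
move=> /cox_word [w [hu ha hs -> hm]] hj.
have hjw : j \in w by apply: hm.
case/splitPr: hjw hu ha => w1 w2 hu ha.
exists (word_prod n w1), (word_prod n w2); split.
- apply: pres_word; apply/allP => i hi.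
  move: hu; rewrite cat_uniq /= => /and3P [_ h1 _].
  rewrite (allP ha i) ?mem_cat ?hi //=.
  by apply/eqP => e; move: h1; rewrite /= -e hi.
- apply: pres_word; apply/allP => i hi.
  move: hu; rewrite cat_uniq /= => /and3P [_ _ /andP [h1 _]].
  rewrite (allP ha i) ?mem_cat /= ?inE ?hi ?orbT //=.
  by apply/eqP => e; move: h1; rewrite -e hi.
- by rewrite /word_prod big_cat big_cons /= mulgA.
Qed.

Lemma ord_of (m : nat) : m <= n -> exists x : 'I_n.+1, nat_of_ord x = m.
Proof. by move=> h; exists (inord m); rewrite inordv. Qed.

Lemma cox_notpres c j : coxeter_element c -> 1 <= j <= n -> ~~ presb c j.
Proof.
move=> hc hj; case: (cox_split hc hj) => P1 [P2 [h1 h2 ->]].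
case: (@ord_of j.-1) => [|z hz]; first lia.
apply/negP => /presP hp.
have := hp (P1^-1 z)%g.
have /presP hi := pres_inv h1.
rewrite hi ?hz; last lia.
rewrite !permM permKV.
move=> /(_ isT).
have : j <= sadj n j z by rewrite sadjE // hz eqxx.
move=> /(pres_ge h2); lia.
Qed.

Lemma cox_down_uniq c j (y1 y2 : 'I_n.+1) : coxeter_element c -> 1 <= j <= n ->
  j <= y1 -> j <= y2 -> c y1 < j -> c y2 < j -> y1 = y2.
Proof.
move=> hc hj; case: (cox_split hc hj) => P1 [P2 [h1 h2 ->]].
have key : forall y : 'I_n.+1, j <= y -> (P1 * sadj n j * P2)%g y < j -> nat_of_ord (P1 y) = j.
  move=> y hy; rewrite !permM.
  have hPy := pres_ge h1 hy.
  move=> hlt; apply/eqP; apply: contraTT hlt => hne; rewrite -leqNgt.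
  apply: pres_ge h2 _; rewrite sadjE //.
  case: ifP => [/eqP e|_]; first lia.
  by rewrite (negbTE hne).
move=> hy1 hy2 c1 c2.
apply: (@perm_inj _ P1); apply: val_inj => /=.
by rewrite (key _ hy1 c1) (key _ hy2 c2).
Qed.

Lemma card_porbits1 : #|porbits (1 : 'S_n.+1)| = n.+1.
Proof.
rewrite /porbits card_imset ?card_ord // => x y; move/eqP; rewrite eq_porbit_mem.
by rewrite porbit.unlock cycle1 imset_set1 /aperm perm1 inE=> /eqP.
Qed.

Lemma card_porbits_word w : uniq w -> all (fun i => 0 < i <= n) w ->
  #|porbits (word_prod n w)| + size w = n.+1.
Proof.
elim: w => [|i w IH] /=; first by move=> _ _; rewrite /word_prod big_nil addn0 card_porbits1.
case/andP => hiw hu /andP [hi ha].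
have hp : presb (word_prod n w) i.
  apply: pres_word; apply/allP => l hl; rewrite (allP ha l hl) /=.
  by apply/eqP => e; move: hiw; rewrite -e hl.
have := porbits_mul_tperm (word_prod n w) (inord i.-1) (inord i).
rewrite /word_prod big_cons -/(word_prod n w) -/(sadj n i).
have -> : (inord i.-1 : 'I_n.+1) \notin porbit (word_prod n w) (inord i).
  apply/negP => /porbitP [t e].
  have : i <= ((word_prod n w ^+ t)%g (inord i)).
    apply: pres_ge; first exact: pres_exp. rewrite inordv; lia.
  rewrite -e inordv; lia.
have -> : (inord i.-1 : 'I_n.+1) != inord i.
  apply/negP => /eqP /(congr1 val) /=; rewrite !inordv; lia.
move: IH => /(_ hu ha) IH; move=> h; rewrite /= -addnn in h.
have h' : #|porbits (sadj n i * word_prod n w)%g| + 2 = #|porbits (word_prod n w)| + 1 by exact: h.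
change (#|porbits (sadj n i * word_prod n w)%g| + (size w).+1 = n.+1); lia.
Qed.

Lemma cox_cycle c : coxeter_element c -> forall x y : 'I_n.+1, exists t, y = (c ^+ t)%g x.
Proof.
move=> /cox_word [w [hu ha hs -> _]] x y.
have h1 := card_porbits_word hu ha; rewrite hs in h1.
have h : #|porbits (word_prod n w)| = 1 by lia.
have : porbit (word_prod n w) x = porbit (word_prod n w) y.
  have [S hS] := cards1P (introT eqP h).
  have : porbit (word_prod n w) x \in porbits (word_prod n w) by apply: imset_f.
  have : porbit (word_prod n w) y \in porbits (word_prod n w) by apply: imset_f.
  by rewrite hS !inE => /eqP -> /eqP ->.
move=> e; apply/porbitP; rewrite e; exact: porbit_id.
Qed.


Definition Ecount p := #|[set j : 'I_n.+1 | (0 < j) && ~~ presb p j]|.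

Lemma Ecount1 : Ecount 1 = 0.
Proof.
rewrite /Ecount; apply/eqP; rewrite cards_eq0; apply/eqP/setP => j.
by rewrite !inE pres1 andbF.
Qed.

Lemma E_sadj_mul i q : 1 <= i <= n -> Ecount (sadj n i * q)%g <= (Ecount q).+1.
Proof.
move=> hi; rewrite /Ecount.
apply: leq_trans (_ : #|(inord i : 'I_n.+1) |: [set j : 'I_n.+1 | (0 < j) && ~~ presb q j]| <= _).
  apply: subset_leq_card; apply/subsetP => j; rewrite !inE => /andP [hj hp].
  case: (eqVneq (nat_of_ord j) i) => e.
    by apply/orP; left; apply/eqP/val_inj => /=; rewrite inordv ?e //; lia.
  rewrite hj /=; apply/orP; right; apply: contra hp => hq.
  by apply: pres_mul => //; apply: pres_sadj => //; rewrite eq_sym.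
by rewrite cardsU1; case: (_ \notin _).
Qed.

Lemma E_word w : all (fun i => 0 < i <= n) w -> Ecount (word_prod n w) <= size w.
Proof.
elim: w => [|i w IH] /=; first by rewrite /word_prod big_nil Ecount1.
case/andP => hi ha; rewrite /word_prod big_cons -/(word_prod n w).
apply: leq_trans (E_sadj_mul _ hi) _; rewrite ltnS; exact: IH.
Qed.

Lemma has_word_E p m : has_word p m -> Ecount p <= m.
Proof. by case=> w [<- ha ->]; apply: E_word. Qed.

Lemma E_full p : (forall j, 1 <= j <= n -> ~~ presb p j) -> Ecount p = n.
Proof.
move=> h; rewrite /Ecount.
have -> : [set j : 'I_n.+1 | (0 < j) && ~~ presb p j] = [set~ ord0].
  apply/setP => j; rewrite !inE -(inj_eq val_inj) /= -lt0n.
  case: (posnP j) => [->|hj] //=; rewrite h //; have := ltn_ord j; lia.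
by rewrite cardsC1 card_ord.
Qed.

Lemma sadj_invol k : (sadj n k * sadj n k)%g = 1%g.
Proof. by rewrite /sadj -{1}tpermV mulVg. Qed.

Lemma cox_len_pres c k : coxeter_element c -> 1 <= k <= n ->
  forall q, (forall j, j != k -> presb q j -> presb c j) ->
  forall m m', is_coxlen q m' -> is_coxlen c m -> m' < m -> presb q k.
Proof.
move=> hc hk q hq m m' [hw' _] [_ hmin] hlt.
case: (cox_word hc) => w [hu ha hs ec _].
have hm : m <= n by apply: hmin; exists w; split.
have := has_word_E hw'.
apply: contraTT => hnp; rewrite -ltnNge.
rewrite (@E_full q); first lia.
move=> j hj; case: (eqVneq j k) => [->//|ne].
by apply: contra (cox_notpres hc hj); apply: hq.
Qed.

Lemma initial_pres c k : coxeter_element c -> 1 <= k <= n ->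
  initial (sadj n k) c -> presb (c * sadj n k)%g k.
Proof.
move=> hc hk [m [m' [h1 h2 h3]]]; apply: (cox_len_pres hc hk _ h1 h2 h3).
move=> j ne hp; rewrite -(mulg1 c) -(sadj_invol k) mulgA.
by apply: pres_mul => //; apply: pres_sadj; rewrite // eq_sym.
Qed.

Lemma final_pres c k : coxeter_element c -> 1 <= k <= n ->
  final (sadj n k) c -> presb (sadj n k * c)%g k.
Proof.
move=> hc hk [m [m' [h1 h2 h3]]]; apply: (cox_len_pres hc hk _ h1 h2 h3).
move=> j ne hp; rewrite -(mul1g c) -(sadj_invol k) -mulgA.
by apply: pres_mul => //; apply: pres_sadj; rewrite // eq_sym.
Qed.

End Perm.

Section Graph.
Variables (T : finType) (Vp : pred T) (E : rel T).

Lemma is_path_setP (S : {set T}) :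
  is_path_set Vp E S <->
  exists s : seq T, [/\ 0 < size s, uniq s, all Vp s, sorted E s & S = [set x in s]].
Proof.
split.
  case/existsP => m /existsP [s /and5P [h1 h2 h3 h4 /eqP h5]].
  by exists s; rewrite size_tuple; split.
case=> s [h1 h2 h3 h4 h5].
have hs : size s < #|T|.+1.
  by rewrite ltnS -(card_uniqP h2); apply: max_card.
apply/existsP; exists (Ordinal hs); apply/existsP; exists (in_tuple s).
by rewrite /= h1 h2 h3 h4 h5 eqxx.
Qed.

Lemma path_set_Vp S u : is_path_set Vp E S -> u \in S -> Vp u.
Proof. by case/is_path_setP => s [_ _ /allP ha _ ->]; rewrite inE => /ha. Qed.

Hypothesis EVp : forall x y, E x y -> Vp x && Vp y.

Lemma path_all x p : path E x p -> all Vp p.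
Proof.
elim: p x => [|y p IH] x //= /andP [hxy hp].
by rewrite (IH y hp) andbT; case/andP: (EVp hxy).
Qed.

Variable phi : T -> nat.

Lemma path_uniq_dec x p : (forall a b, E a b -> phi b < phi a) -> path E x p -> uniq (x :: p).
Proof.
move=> hd hp.
have : sorted (fun a b => phi b < phi a) (x :: p).
  by apply: sub_path hp => a b /hd.
apply: sorted_uniq.
- by move=> a b c h1 h2; apply: ltn_trans h2 h1.
- by move=> a; rewrite ltnn.
Qed.

Lemma path_uniq_inc x p : (forall a b, E a b -> phi a < phi b) -> path E x p -> uniq (x :: p).
Proof.
move=> hd hp.
have : sorted (fun a b => phi a < phi b) (x :: p).
  by apply: sub_path hp => a b /hd.
apply: sorted_uniq.
- by move=> a b c h1 h2; apply: ltn_trans h1 h2.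
- by move=> a; rewrite ltnn.
Qed.

Variable v : T.

Definition ext_prop := forall S, is_path_set Vp E S ->
  exists S', [/\ is_path_set Vp E S', S \subset S' & v \in S'].

Lemma ext_sink : (forall a b, E a b -> phi b < phi a) ->
  (forall u, Vp u -> u != v -> exists w, E u w) -> ext_prop.
Proof.
move=> hd hout.
have reach : forall u, Vp u -> exists p, path E u p /\ last u p = v.
  move=> u; elim: {u} (phi u) {-2}u (leqnn (phi u)) => [|m IH] u hu hVu.
    case: (eqVneq u v) => [->|ne]; first by exists [::].
    by case: (hout u hVu ne) => w /hd; lia.
  case: (eqVneq u v) => [->|ne]; first by exists [::].
  case: (hout u hVu ne) => w hw.
  case: (IH w) => [||p [hp hl]].
  - by have := hd _ _ hw; lia.
  - by case/andP: (EVp hw).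
  by exists (w :: p); rewrite /= hw hp.
move=> S /is_path_setP [[|x s] [h0 hu ha hs ->]]; first by [].
have hVl : Vp (last x s) by apply: (allP ha); apply: mem_last.
case: (reach _ hVl) => p [hp hl].
have hpath : path E x (s ++ p) by rewrite cat_path hp andbT; exact: hs.
exists [set y in x :: (s ++ p)]; split.
- apply/is_path_setP; exists (x :: (s ++ p)); split => //.
  + exact: path_uniq_dec hd hpath.
  + rewrite /= all_cat (path_all hp) andbT.
    by move: ha => /= /andP [-> ->].
- by apply/subsetP => y; rewrite !inE mem_cat => /orP [->|->] //; rewrite orbT.
- by rewrite inE -hl -last_cat mem_last.
Qed.

Lemma ext_source : (forall a b, E a b -> phi a < phi b) ->
  (forall u, Vp u -> u != v -> exists w, E w u) -> Vp v -> ext_prop.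
Proof.
move=> hd hin hVv.
have reach : forall u, Vp u -> exists p, path E v p /\ last v p = u.
  move=> u; elim: {u} (phi u) {-2}u (leqnn (phi u)) => [|m IH] u hu hVu.
    case: (eqVneq u v) => [->|ne]; first by exists [::].
    by case: (hin u hVu ne) => w /hd; lia.
  case: (eqVneq u v) => [->|ne]; first by exists [::].
  case: (hin u hVu ne) => w hw.
  case: (IH w) => [||p [hp hl]].
  - by have := hd _ _ hw; lia.
  - by case/andP: (EVp hw).
  by exists (rcons p u); rewrite rcons_path hp hl hw last_rcons.
move=> S /is_path_setP [[|x s] [h0 hu ha hs ->]]; first by [].
have hVx : Vp x by move: ha => /= /andP [].
case: (reach _ hVx) => p [hp hl].
have hpath : path E v (p ++ s) by rewrite cat_path hp hl /=; exact: hs.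
exists [set y in v :: (p ++ s)]; split.
- apply/is_path_setP; exists (v :: (p ++ s)); split => //.
  + exact: path_uniq_inc hd hpath.
  + by rewrite /= all_cat (path_all hp) (path_all hs) hVv.
- apply/subsetP => y; rewrite !inE mem_cat => /orP [/eqP ->|->]; last by rewrite !orbT.
  by rewrite -hl; case: (lastP p) => [|q z]; rewrite ?eqxx // last_rcons mem_rcons inE eqxx !orbT.
- by rewrite inE mem_head.
Qed.

End Graph.

Section GK.
Variables (T : finType) (Vp : pred T) (E : rel T).

Lemma sum_subset (A B : {set T}) (g : T -> nat) :
  A \subset B -> \sum_(u in A) g u <= \sum_(u in B) g u.
Proof.
move=> hAB; rewrite [X in _ <= X](big_setID A) /=.
by rewrite setIC (setIidPl hAB) leq_addr.
Qed.

Lemma GK_M_ext g1 g2 t : (forall u, Vp u -> g1 u = g2 u) ->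
  GK_M Vp E g1 t = GK_M Vp E g2 t.
Proof.
move=> h; apply: eq_bigr => F /forallP hF; apply: eq_bigr => u /bigcupP [i _ hu].
by apply: h; apply: (path_set_Vp (hF i)).
Qed.

Lemma GK_M_add g (v : T) a t : Vp v -> ext_prop Vp E v -> 0 < t ->
  GK_M Vp E (fun u => g u + (if u == v then a else 0)) t = GK_M Vp E g t + a.
Proof.
move=> hv hext ht; apply/eqP; rewrite eqn_leq; apply/andP; split.
  apply/bigmax_leqP => F hF; rewrite big_split /=.
  apply: leq_add; first by apply: leq_bigmax_cond.
  case: (boolP (v \in \bigcup_(i < t) F i)) => hvU.
    rewrite (bigD1 v) //= eqxx big1 ?addn0 // => u /andP [_ /negbTE ->] //.
  by rewrite big1 // => u hu; case: eqP => // e; move: hvU; rewrite -e hu.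
pose P := fun F : {ffun 'I_t -> {set T}} => [forall i, is_path_set Vp E (F i)].
have hne : 0 < #|P|.
  apply/card_gt0P; exists [ffun=> [set v]]; rewrite /P /in_mem /=.
  apply/forallP => i; rewrite ffunE; apply/is_path_setP; exists [:: v]; split => //=.
  - by rewrite hv.
  - by apply/setP => y; rewrite !inE.
case: (@eq_bigmax_cond _ P (fun F : {ffun 'I_t -> {set T}} => \sum_(u in \bigcup_(i < t) F i) g u) hne) => F0 hF0 e0.
rewrite /GK_M -/P e0.
have hF0' : forall i, is_path_set Vp E (F0 i) by apply/forallP.
pose i0 : 'I_t := Ordinal ht.
case: (hext _ (hF0' i0)) => S' [hS' hsub hvS'].
pose F1 := [ffun i => if i == i0 then S' else F0 i].
have hF1 : P F1.
  by apply/forallP => i; rewrite ffunE; case: eqP => _; [apply: hS' | apply: hF0'].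
have hU : \bigcup_(i < t) F0 i \subset \bigcup_(i < t) F1 i.
  apply/subsetP => u /bigcupP [i _ hu]; apply/bigcupP; exists i => //.
  rewrite ffunE; case: eqP => [e|//]; rewrite e in hu; exact: (subsetP hsub).
have hvU : v \in \bigcup_(i < t) F1 i.
  by apply/bigcupP; exists i0 => //; rewrite ffunE eqxx.
apply: leq_trans (leq_bigmax_cond F1 hF1).
rewrite big_split /= [X in _ <= _ + X](bigD1 v) //= eqxx.
have z : \sum_(i in \bigcup_(i1 < t) F1 i1 | i != v) (if i == v then a else 0) = 0.
  by apply: big1 => u /andP [_ /negbTE ->].
rewrite z addn0 leq_add2r; exact: sum_subset.
Qed.

Lemma GK_part_add g (v : T) a d : Vp v -> ext_prop Vp E v -> 0 < d ->
  GK_part Vp E (fun u => g u + (if u == v then a else 0)) d =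
  GK_part Vp E g d + (if d == 1 then a else 0).
Proof.
move=> hv hext hd; rewrite /GK_part GK_M_add //.
case: d hd => [//|[|d]] _ /=.
  have H0 : forall h, GK_M Vp E h 0 = 0.
    by move=> h; rewrite /GK_M; apply/eqP; rewrite -leqn0; apply/bigmax_leqP => F _; rewrite big_ord0 big_set0.
  by rewrite !H0 !subn0.
by rewrite GK_M_add // subnDr addn0.
Qed.

End GK.

Section Sigma.
Variables (n : nat) (c : 'S_n.+1).

Lemma pfun_ord (o : 'I_n.+1) : pfun c o.+1 = (c o).+1.
Proof. by rewrite /pfun /= inord_val. Qed.

Lemma range_ord x : 1 <= x <= n.+1 -> exists o : 'I_n.+1, x = o.+1.
Proof.
move=> h; exists (inord x.-1); rewrite inordv; lia.
Qed.

Lemma pfun_range x : 1 <= pfun c x <= n.+1.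
Proof. by rewrite /pfun /= ltn_ord. Qed.

Lemma pfun_iter t (o : 'I_n.+1) : iter t (pfun c) o.+1 = ((c ^+ t)%g o).+1.
Proof.
elim: t => [|t IH]; first by rewrite expg0 perm1.
by rewrite iterS IH pfun_ord expgSr permM.
Qed.

Lemma pfun_inj x y : 1 <= x <= n.+1 -> 1 <= y <= n.+1 -> pfun c x = pfun c y -> x = y.
Proof.
move=> /range_ord [o ->] /range_ord [p ->]; rewrite !pfun_ord => [[]] /val_inj /(@perm_inj _ c) -> //.
Qed.

Lemma pfun_surj y : 1 <= y <= n.+1 -> exists x, 1 <= x <= n.+1 /\ pfun c x = y.
Proof.
move=> /range_ord [o ->]; exists ((c^-1)%g o).+1; rewrite pfun_ord permKV; split => //.
by rewrite ltn_ord.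
Qed.

Lemma iter_range t x : 1 <= x <= n.+1 -> 1 <= iter t (pfun c) x <= n.+1.
Proof. by case: t => [//|t] _; rewrite iterS pfun_range. Qed.

Lemma pfun_cycle : coxeter_element c -> forall x y, 1 <= x <= n.+1 -> 1 <= y <= n.+1 ->
  exists t, iter t (pfun c) x = y.
Proof.
move=> hc x y /range_ord [o ->] /range_ord [p ->].
case: (cox_cycle hc o p) => t e; exists t; by rewrite pfun_iter -e.
Qed.

End Sigma.

Section Conds.
Variables (n : nat) (c : 'S_n.+1) (k : nat).
Hypotheses (hc : coxeter_element c) (hk : 1 <= k <= n).

Lemma sadj_fix (o : 'I_n.+1) : nat_of_ord o != k.-1 -> nat_of_ord o != k -> sadj n k o = o.
Proof. by move=> h1 h2; apply: val_inj => /=; rewrite sadjE // (negbTE h1) (negbTE h2). Qed.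

Lemma sadj_km1 : nat_of_ord (sadj n k (inord k.-1)) = k.
Proof. by rewrite sadjE // inordv ?eqxx //; lia. Qed.

Lemma sadj_k : nat_of_ord (sadj n k (inord k)) = k.-1.
Proof. rewrite sadjE // inordv; last lia. have -> : (k == k.-1) = false by apply/eqP; lia. by rewrite eqxx. Qed.

Lemma cross_up : exists o : 'I_n.+1, o < k /\ k <= c o.
Proof.
case/forallPn: (cox_notpres hc hk) => o; rewrite negb_imply => /andP [h1 h2].
by exists o; split => //; rewrite leqNgt.
Qed.

Hypothesis hfin : presb (sadj n k * c)%g k.

Lemma O1 (o : 'I_n.+1) : o < k.-1 -> c o < k.
Proof.
move=> ho; move/presP: hfin => /(_ o); rewrite permM sadj_fix; try (apply/eqP; lia).
by apply; lia.
Qed.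

Lemma O3 : c (inord k) < k.
Proof.
move/presP: hfin => /(_ (inord k.-1)); rewrite permM.
have -> : sadj n k (inord k.-1) = inord k.
  by apply: val_inj; rewrite /= sadj_km1 inordv //; lia.
by apply; rewrite inordv; lia.
Qed.

Lemma O4 : k <= c (inord k.-1).
Proof.
case: cross_up => o [h1 h2].
case: (ltnP o k.-1) => h3; first by have := O1 h3; lia.
have -> : (inord k.-1 : 'I_n.+1) = o by apply: val_inj; rewrite /= inordv; lia.
done.
Qed.

Lemma O2 (o : 'I_n.+1) : k < o -> k <= c o.
Proof.
move=> ho; rewrite leqNgt; apply/negP => h.
have hk' : k <= nat_of_ord (inord k : 'I_n.+1) by rewrite inordv; lia.
have := cox_down_uniq hc hk (ltnW ho) hk' h O3.
move=> /(congr1 val) /=; rewrite inordv; lia.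
Qed.

End Conds.

Section Conds2.
Variables (n : nat) (c : 'S_n.+1) (k : nat).
Hypotheses (hc : coxeter_element c) (hk : 1 <= k <= n).
Hypothesis hini : presb (c * sadj n k)%g k.

Lemma Q1 (o : 'I_n.+1) : o < k -> k <= c o -> nat_of_ord (c o) = k.
Proof.
move=> ho hco; move/presP: hini => /(_ o ho); rewrite permM sadjE //.
case: ifP => [/eqP|_]; first lia.
case: ifP => [/eqP //|_]; lia.
Qed.

Lemma Q2 (o : 'I_n.+1) : k <= o -> c o < k -> nat_of_ord (c o) = k.-1.
Proof.
move=> ho hco.
pose z := (c^-1)%g (inord k.-1).
have hz : c z = inord k.-1 by rewrite /z permKV.
have hzk : k <= z.
  rewrite leqNgt; apply/negP => hz'.
  move/presP: hini => /(_ z hz'); rewrite permM hz sadj_km1; lia.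
have hz2 : c z < k by rewrite hz inordv; lia.
have := cox_down_uniq hc hk ho hzk hco hz2.
by move=> ->; rewrite hz inordv; lia.
Qed.

End Conds2.

Section Labels.
Variables (n : nat) (c : 'S_n.+1) (k : nat).
Hypotheses (hc : coxeter_element c) (hk : 1 <= k <= n).
Local Notation sg := (pfun c).

Lemma lab_ord x : 1 <= x <= n.+1 -> sg x = (c (inord x.-1)).+1.
Proof. by move=> h; rewrite /pfun. Qed.

Section Sink.
Hypothesis hfin : presb (sadj n k * c)%g k.

Lemma LS1 l : 1 <= l < k -> sg l <= k.
Proof. move=> h; rewrite /pfun; have := O1 hk hfin (o := inord l.-1); rewrite inordv; lia. Qed.

Lemma LS2 r : k.+1 < r <= n.+1 -> k < sg r.
Proof. move=> h; rewrite /pfun; have := O2 hc hk hfin (o := inord r.-1); rewrite inordv; lia. Qed.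

Lemma LS3 : sg k.+1 <= k.
Proof. rewrite /pfun /=; have := O3 hk hfin; lia. Qed.

Lemma LS4 : k < sg k.
Proof. rewrite /pfun /=; have := O4 hc hk hfin; lia. Qed.
End Sink.

Section Source.
Hypothesis hini : presb (c * sadj n k)%g k.

Lemma LT1 l : 1 <= l <= k -> k < sg l -> sg l = k.+1.
Proof. move=> h; rewrite /pfun; have := Q1 hk hini (o := inord l.-1); rewrite inordv; lia. Qed.

Lemma LT2 r : k < r <= n.+1 -> sg r <= k -> sg r = k.
Proof. move=> h; rewrite /pfun; have := Q2 hc hk hini (o := inord r.-1); rewrite inordv; lia. Qed.

Lemma LT3 r : k < r <= n.+1 -> sg r != k.+1.
Proof.
move=> h; apply/eqP => e.
case: (cross_up hc hk) => o [h1 h2].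
have e2 : sg o.+1 = k.+1 by rewrite pfun_ord; have := Q1 hk hini h1 h2; lia.
have := pfun_inj (x := r) (y := o.+1) _ _ (etrans e (esym e2)).
have := ltn_ord o; lia.
Qed.
End Source.
End Labels.

Lemma LT4 (n : nat) (c : 'S_n.+1) (k : nat) : coxeter_element c -> 1 <= k <= n ->
  presb (c * sadj n k)%g k -> forall l, 1 <= l <= k -> pfun c l != k.
Proof.
move=> hc hk hini l hl; apply/eqP => e.
pose z := (c^-1)%g (inord k.-1).
have hz : c z = inord k.-1 by rewrite /z permKV.
have hzk : k <= z.
  rewrite leqNgt; apply/negP => hz'.
  move/presP: hini => /(_ z hz'); rewrite permM hz sadj_km1 //; lia.
have e2 : pfun c z.+1 = k by rewrite pfun_ord hz inordv; lia.
have := pfun_inj (x := l) (y := z.+1) _ _ (etrans e (esym e2)).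
have := ltn_ord z; lia.
Qed.

Lemma minpot (P : nat -> nat -> bool) (R : pred nat) :
  (forall x, R x -> exists t, P x t) ->
  exists phi : nat -> nat, forall x, R x -> P x (phi x) /\ forall t, P x t -> phi x <= t.
Proof.
move=> h.
have ex : forall x, exists t, ~~ R x || P x t.
  move=> x; case: (boolP (R x)) => hx; last by exists 0.
  by case: (h x hx) => t ht; exists t; rewrite ht orbT.
exists (fun x => ex_minn (ex x)) => x hx.
case: ex_minnP => m hm hmin; split.
  by move: hm; rewrite hx.
by move=> t ht; apply: hmin; rewrite ht orbT.
Qed.

Section ARgraph.
Variables (n : nat) (c : 'S_n.+1) (k : nat).
Hypotheses (hc : coxeter_element c) (hk : 1 <= k <= n).
Local Notation sg := (pfun c).

Definition vk : vtx n := (inord k, inord k.+1).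

Lemma vk1 : nat_of_ord vk.1 = k. Proof. by rewrite /= inordv; lia. Qed.
Lemma vk2 : nat_of_ord vk.2 = k.+1. Proof. by rewrite /= inordv; lia. Qed.

Lemma vk_vert : ARk_vert k vk.
Proof. by rewrite /ARk_vert vk1 vk2; apply/and4P; split; lia. Qed.

Lemma vtx_eq (u : vtx n) : nat_of_ord u.1 = k -> nat_of_ord u.2 = k.+1 -> u = vk.
Proof.
case: u => a b /= h1 h2; congr pair; apply: val_inj; rewrite /= inordv //; lia.
Qed.

Lemma EVp_AR (a b : vtx n) : ARk_edge c k a b -> ARk_vert k a && ARk_vert k b.
Proof. by case/and3P => -> ->. Qed.

Lemma vertP (u : vtx n) : ARk_vert k u -> [/\ 1 <= u.1, u.1 <= k, k < u.2 & u.2 <= n.+1].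
Proof. by case/and4P. Qed.

Lemma sg_lab (x : nat) : exists o : 'I_n.+2, nat_of_ord o = sg x.
Proof. by exists (inord (sg x)); rewrite inordv //; have := pfun_range c x; lia. Qed.

Lemma ext_AR_sink : presb (sadj n k * c)%g k -> ext_prop (ARk_vert k) (ARk_edge c k) vk.
Proof.
move=> hfin.
have hcyc := pfun_cycle hc.
case: (@minpot (fun x t => iter t sg x == k) (fun x => 1 <= x <= n.+1)) => [x hx|phiL hL].
  by case: (hcyc x k hx) => [|t ht]; [lia|exists t; apply/eqP].
case: (@minpot (fun x t => iter t sg x == k.+1) (fun x => 1 <= x <= n.+1)) => [x hx|phiR hR].
  by case: (hcyc x k.+1 hx) => [|t ht]; [lia|exists t; apply/eqP].
apply: (@ext_sink _ _ _ (@EVp_AR) (fun u : vtx n => phiL u.1 + phiR u.2)).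
- move=> [a1' a2'] [b1' b2'] /and3P [va vb]; case/vertP: va => a1 a2 a3 a4; case/vertP: vb => b1 b2 b3 b4.
  rewrite /= in a1 a2 a3 a4 b1 b2 b3 b4 *.
  case/orP => /and3P [/eqP e1 /eqP e2 lt].
  + rewrite e1 ltn_add2l.
    case: (hR a2') => [|/eqP ha hmin]; first by apply/andP; lia.
    have ne : nat_of_ord a2' != k.+1.
      by apply/eqP => e; move: b3; rewrite e2 e; have := LS3 hk hfin; lia.
    case: (phiR a2') ha hmin => [|t] ha hmin; first by move: ne; rewrite -ha /= eqxx.
    have : phiR b2' <= t.
      by case: (hR b2') => [|_ h]; [apply/andP; lia|apply: h; rewrite e2 -iterSr ha].
    lia.
  + rewrite e1 ltn_add2r.
    case: (hL a1') => [|/eqP ha hmin]; first by apply/andP; lia.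
    have ne : nat_of_ord a1' != k.
      by apply/eqP => e; move: b2; rewrite e2 e; have := LS4 hc hk hfin; lia.
    case: (phiL a1') ha hmin => [|t] ha hmin; first by move: ne; rewrite -ha /= eqxx.
    have : phiL b1' <= t.
      by case: (hL b1') => [|_ h]; [apply/andP; lia|apply: h; rewrite e2 -iterSr ha].
    lia.
- move=> [x1 x2] hu ne; case/vertP: (hu) => /= u1 u2 u3 u4.
  have r1 := pfun_range c x1; have r2 := pfun_range c x2.
  case: (eqVneq (nat_of_ord x1) k) => e1.
  + have e2 : nat_of_ord x2 != k.+1.
      by apply/eqP => e2; move: ne; rewrite (vtx_eq (u := (x1, x2)) e1 e2) eqxx.
    move/eqP: e2 => e2.
    have h1 : k < sg x2 by apply: (LS2 hc hk hfin); lia.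
    case: (sg_lab x2) => o ho.
    exists (x1, o); rewrite /ARk_edge hu /ARk_vert /AR_arrow /= ho !eqxx /=.
    apply/andP; split; first by apply/and4P; split; lia.
    by apply/orP; left; lia.
  + move/eqP: e1 => e1.
    have h1 : sg x1 <= k by apply: (LS1 hk hfin); lia.
    case: (sg_lab x1) => o ho.
    exists (o, x2); rewrite /ARk_edge hu /ARk_vert /AR_arrow /= ho !eqxx /=.
    apply/andP; split; first by apply/and3P; split; lia.
    by apply/orP; right; lia.
Qed.


Lemma ext_AR_source : presb (c * sadj n k)%g k -> ext_prop (ARk_vert k) (ARk_edge c k) vk.
Proof.
move=> hini.
have hcyc := pfun_cycle hc.
case: (@minpot (fun x t => iter t sg k == x) (fun x => 1 <= x <= n.+1)) => [x hx|phiL hL].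
  by case: (hcyc k x _ hx) => [|t ht]; [lia|exists t; apply/eqP].
case: (@minpot (fun x t => iter t sg k.+1 == x) (fun x => 1 <= x <= n.+1)) => [x hx|phiR hR].
  by case: (hcyc k.+1 x _ hx) => [|t ht]; [lia|exists t; apply/eqP].
apply: (@ext_source _ _ _ (@EVp_AR) (fun u : vtx n => phiL u.1 + phiR u.2)); last exact: vk_vert.
- move=> [a1' a2'] [b1' b2'] /and3P [va vb]; case/vertP: va => a1 a2 a3 a4; case/vertP: vb => b1 b2 b3 b4.
  rewrite /= in a1 a2 a3 a4 b1 b2 b3 b4 *.
  have r1 := pfun_range c a1'; have r2 := pfun_range c a2'.
  case/orP => /and3P [/eqP e1 /eqP e2 lt]; rewrite /= in e1 e2 lt *.
  + rewrite e1 ltn_add2l.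
    case: (hR b2') => [|/eqP hb hmin]; first by apply/andP; lia.
    case: (phiR b2') hb hmin => [|s] hb hmin.
      by move: (LT3 hc hk hini (r := a2')); rewrite -e2 -hb /= eqxx; move=> /(_ _) /=; lia.
    rewrite iterS e2 in hb.
    have hir : 1 <= iter s sg k.+1 <= n.+1 by apply: iter_range; apply/andP; split; lia.
    have h : iter s sg k.+1 = a2' by apply: (pfun_inj hir _ hb); apply/andP; split; lia.
    have : phiR a2' <= s.
      by case: (hR a2') => [|_ hm]; [apply/andP; lia | apply: hm; rewrite h].
    lia.
  + rewrite e1 ltn_add2r.
    case: (hL b1') => [|/eqP hb hmin]; first by apply/andP; lia.
    case: (phiL b1') hb hmin => [|s] hb hmin.
      move: (LT4 hc hk hini (l := a1')); rewrite -e2 -hb /= eqxx.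
      by move=> /(_ _) /=; apply; apply/andP; split; lia.
    rewrite iterS e2 in hb.
    have hir : 1 <= iter s sg k <= n.+1 by apply: iter_range; apply/andP; split; lia.
    have h : iter s sg k = a1' by apply: (pfun_inj hir _ hb); apply/andP; split; lia.
    have : phiL a1' <= s.
      by case: (hL a1') => [|_ hm]; [apply/andP; lia | apply: hm; rewrite h].
    lia.
- move=> [x1 x2] hu ne; case/vertP: (hu) => /= u1 u2 u3 u4.
  case: (eqVneq (nat_of_ord x1) k) => e1.
  + have e2 : nat_of_ord x2 != k.+1.
      by apply/eqP => e2; move: ne; rewrite (vtx_eq (u := (x1, x2)) e1 e2) eqxx.
    move/eqP: e2 => e2.
    case: (@pfun_surj _ c x2) => [|q [hq eq]]; first by apply/andP; split; lia.
    have hq2 : k < q.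
      rewrite ltnNge; apply/negP => hqk.
      have h := LT1 hk hini (l := q).
      apply: e2; rewrite -eq; apply: h; last by rewrite eq.
      by case/andP: hq => hq1 _; apply/andP; split.
    have [o ho] : exists o : 'I_n.+2, nat_of_ord o = q.
      by exists (inord q); rewrite inordv //; case/andP: hq.
    exists (x1, o); rewrite /ARk_edge hu /ARk_vert /AR_arrow /= ho eq !eqxx /=.
    apply/andP; split; first by apply/and4P; split => //; case/andP: hq.
    by apply/orP; left; lia.
  + move/eqP: e1 => e1.
    case: (@pfun_surj _ c x1) => [|p [hp ep]]; first by apply/andP; split; lia.
    have hp2 : p <= k.
      rewrite leqNgt; apply/negP => hpk.
      have h := LT2 hc hk hini (r := p).
      apply: e1; rewrite -ep; apply: h; last by rewrite ep.
      by case/andP: hp => _ hp2; apply/andP; split.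
    have [o ho] : exists o : 'I_n.+2, nat_of_ord o = p.
      by exists (inord p); rewrite inordv //; case/andP: hp.
    exists (o, x2); rewrite /ARk_edge hu /ARk_vert /AR_arrow /= ho ep !eqxx /=.
    apply/andP; split; first by apply/and4P; split => //; case/andP: hp.
    by apply/orP; right; lia.
Qed.

End ARgraph.

Section Part.
Variable la : seq nat.
Hypothesis hp : is_partition la.

Lemma part_mono i i' : 1 <= i -> i <= i' -> i' <= size la -> part la i' <= part la i.
Proof.
move=> h1 h2 h3; rewrite /part.
case/andP: hp => hs _.
have := @sorted_leq_nth _ geq (fun a b c h1 h2 => leq_trans h2 h1) leqnn 0 la hs (i.-1) (i'.-1).
rewrite !inE => H; apply: H; lia.
Qed.

Lemma part_pos i : 1 <= i <= size la -> 0 < part la i.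
Proof.
move=> h; case/andP: (h) => h1 h2; case/andP: hp => _ /all_nthP H; apply: H; lia.
Qed.

Lemma part_le_lam1 i : 1 <= i <= size la -> part la i <= lam1 la.
Proof.
move=> h; case/andP: (h) => h1 h2; have := @part_mono 1 i; rewrite /part /lam1 /= nth0 => H; apply: H; lia.
Qed.

Lemma part_out i : size la < i -> part la i = 0.
Proof. by move=> h; rewrite /part nth_default //; lia. Qed.

Lemma conjp_ge j i : 1 <= i <= size la -> j <= part la i -> i <= conjp la j.
Proof.
move=> hi hj; case/andP: (hi) => hi1 hi2; rewrite /conjp.
rewrite -(cat_take_drop i la) count_cat.
have : count (fun x => j <= x) (take i la) = size (take i la).
  apply/eqP; rewrite -(all_count (fun x => j <= x) (take i la)).
  apply/(all_nthP 0) => m hm.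
  rewrite size_take_min in hm; rewrite nth_take; last lia.
  apply: leq_trans hj _; have := @part_mono m.+1 i; rewrite /part /=; apply; lia.
rewrite size_take_min; lia.
Qed.

Lemma conjp_lt j i : 1 <= i <= size la -> part la i < j -> conjp la j < i.
Proof.
move=> hi hj; case/andP: (hi) => hi1 hi2; rewrite /conjp.
rewrite -(cat_take_drop i.-1 la) count_cat.
have h1 : count (fun x => j <= x) (take i.-1 la) <= i.-1.
  apply: leq_trans (count_size _ _) _; rewrite size_take_min; lia.
have h2 : count (fun x => j <= x) (drop i.-1 la) = 0.
  apply/eqP; rewrite -leqn0 leqNgt -has_count; apply/hasPn => x /(nthP 0) [m hm <-].
  have hm' : m < size la - i.-1 by move: hm; rewrite size_drop.
  rewrite nth_drop -ltnNge.
  apply: leq_ltn_trans hj; have := @part_mono i (i.-1 + m).+1; rewrite /part /=; apply; lia.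
lia.
Qed.

Lemma Llabels_nth m : m < size la -> nth 0 (Llabels la) m = rowlab la m.+1.
Proof. by move=> h; rewrite /Llabels (nth_map 0) ?size_iota // nth_iota // add1n. Qed.

Lemma Rlabels_nth m : m < lam1 la -> nth 0 (Rlabels la) m = collab la m.+1.
Proof. by move=> h; rewrite /Rlabels (nth_map 0) ?size_iota // nth_iota // add1n. Qed.

Lemma rowof_spec l : l \in Llabels la ->
  1 <= rowof la l <= size la /\ rowlab la (rowof la l) = l.
Proof.
move=> hl; have := index_mem l (Llabels la); rewrite hl /Llabels size_map size_iota -/(Llabels la) => hi.
split; first by rewrite /rowof; lia.
by rewrite /rowof -Llabels_nth // nth_index.
Qed.

Lemma colof_spec r : r \in Rlabels la ->
  1 <= colof la r <= lam1 la /\ collab la (colof la r) = r.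
Proof.
move=> hl; have := index_mem r (Rlabels la); rewrite hl /Rlabels size_map size_iota -/(Rlabels la) => hi.
split; first by rewrite /colof; lia.
by rewrite /colof -Rlabels_nth // nth_index.
Qed.

Lemma rowof_notin l : l \notin Llabels la -> rowof la l = (size la).+1.
Proof. by move=> h; rewrite /rowof memNindex // /Llabels size_map size_iota. Qed.

Lemma colof_notin r : r \notin Rlabels la -> colof la r = (lam1 la).+1.
Proof. by move=> h; rewrite /colof memNindex // /Rlabels size_map size_iota. Qed.

Lemma index_eq (T : eqType) (s : seq T) x y : x \in s -> (index x s == index y s) = (x == y).
Proof.
move=> hx; case: (eqVneq x y) => [->|ne]; first by rewrite eqxx.
apply/negbTE/eqP => e.
case: (boolP (y \in s)) => hy.
  by move: ne; rewrite -(nth_index x hx) e nth_index // eqxx.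
by move: (index_mem x s); rewrite hx e memNindex // ltnn.
Qed.

Lemma corner k : k \in Llabels la -> k.+1 \in Rlabels la ->
  colof la k.+1 = part la (rowof la k).
Proof.
move=> hk hk1.
case: (rowof_spec hk) => hi hr; case: (colof_spec hk1) => hj hc.
set i := rowof la k in hi hr *; set j := colof la k.+1 in hj hc *.
move: hr hc; rewrite /rowlab /collab => hr hc.
have hpl := part_le_lam1 hi.
case: (leqP j (part la i)) => hji.
  have := conjp_ge hi hji; lia.
have := conjp_lt hi hji; lia.
Qed.

End Part.

Lemma rep_addk la k a f l r :
  rep la (addk la k a f) l r =
  rep la f l r + (if [&& l == k, r == k.+1, k \in Llabels la & k.+1 \in Rlabels la] then a else 0).
Proof.
rewrite /rep /addk; case: ifP => H.
  case/and3P: H => hl hr hlr.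
  rewrite /rowof /colof !eqSS (index_eq _ hl) (index_eq _ hr).
  case: (eqVneq l k) => [el|] /=; last by rewrite addn0.
  case: (eqVneq r k.+1) => [er|] /=; last by rewrite addn0.
  by rewrite -er hr -el hl.
case: (eqVneq l k) => [el|] /=; last by [].
case: (eqVneq r k.+1) => [er|] /=; last by [].
case: (boolP (k \in Llabels la)) => //= hk; case: (boolP (k.+1 \in Rlabels la)) => //= hk1.
by move: H; rewrite el er hk hk1 ltnSn.
Qed.

Lemma GK_part_ext (T : finType) (Vp : pred T) (E : rel T) g1 g2 d :
  (forall u, Vp u -> g1 u = g2 u) -> GK_part Vp E g1 d = GK_part Vp E g2 d.
Proof. by move=> h; rewrite /GK_part !(GK_M_ext E _ h). Qed.

Section Box.
Variables (la : seq nat) (k : nat).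
Hypotheses (hp : is_partition la) (hkL : k \in Llabels la) (hkR : k.+1 \in Rlabels la).

Local Notation iB := (rowof la k).
Local Notation jB := (colof la k.+1).

Lemma mem_boxes i j : in_Fer la i j -> (i, j) \in boxes la.
Proof.
move=> /andP [h1 h2]; apply/allpairsPdep; exists i, j; split => //.
  by rewrite mem_iota; lia.
by rewrite mem_iota; lia.
Qed.

Lemma boxes_Fer p : p \in boxes la -> in_Fer la p.1 p.2.
Proof.
case/allpairsPdep => x [y [hx hy ->]]; move: hx hy; rewrite !mem_iota /in_Fer /= => hx hy.
apply/andP; split; lia.
Qed.

Lemma B_facts : [/\ 1 <= iB <= size la, jB = part la iB, 1 <= jB,
   jB <= lam1 la & lam1 la + iB - jB = k].
Proof.
case: (rowof_spec hp hkL) => hi hr.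
have hc := corner hp hkL hkR.
have h1 := part_pos hp hi; have h2 := part_le_lam1 hp hi.
split => //; try lia.
by move: hr; rewrite /rowlab hc; lia.
Qed.

Lemma diag_box i j : in_Fer la i j -> diag la i j = k ->
  (i == iB) && (j == jB) \/ minn i j < minn iB jB.
Proof.
case/andP => /andP [hi1 hi2] /andP [hj1 hj2] hd.
case: B_facts => /andP [hb1 hb2] hb3 hb4 hb5 hb6.
have hpl := part_le_lam1 hp (i := i); have := hpl (ltac:(apply/andP; split; lia)) => hpl'.
move: hd; rewrite /diag => hd.
case: (leqP iB i) => hii.
  have := part_mono hp hb1 hii hi2; rewrite -hb3 => hm.
  left; apply/andP; split; apply/eqP; lia.
right; lia.
Qed.

Lemma delta_B : delta_max la k = minn iB jB.
Proof.
case: B_facts => /andP [hb1 hb2] hb3 hb4 hb5 hb6.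
apply/eqP; rewrite eqn_leq; apply/andP; split.
  apply/bigmax_leqP_seq => p /boxes_Fer hF /eqP hd.
  by case: (diag_box hF hd) => [/andP [/eqP -> /eqP ->]|/ltnW].
apply: (@leq_bigmax_seq _ (boxes la) (fun p : nat * nat => diag la p.1 p.2 == k) (fun p : nat * nat => minn p.1 p.2) (iB, jB)).
  by apply: mem_boxes; apply/andP; split; apply/andP; split; lia.
by rewrite /= /diag hb6.
Qed.

End Box.

Theorem theorem6p15 (n : nat) (la : seq nat) (c : 'S_n.+1) (k : nat) :
  1 <= n -> is_partition la -> lam1 la + size la = n.+1 ->
  coxeter_element c -> 1 <= k <= n ->
  final (sadj n k) (clam n la) ->
  initial (sadj n k) c \/ final (sadj n k) c ->
  forall (a : nat) (f : nat -> nat -> nat) (i j : nat), in_Fer la i j ->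
    RSK la c (addk la k a f) i j = addk la k a (RSK la c f) i j.
Proof.
move=> hn hp hsz hc hk _ hcf a f i j hij.
set kk := diag la i j.
set d := delta_max la kk - minn i j + 1.
have eL : RSK la c (addk la k a f) i j =
  GK_part (@ARk_vert n kk) (ARk_edge c kk) (fun v : vtx n => rep la (addk la k a f) v.1 v.2) d by [].
have eR : RSK la c f i j =
  GK_part (@ARk_vert n kk) (ARk_edge c kk) (fun v : vtx n => rep la f v.1 v.2) d by [].
have eA : addk la k a (RSK la c f) i j =
  if (i == rowof la k) && (j == colof la k.+1) then RSK la c f i j + a else RSK la c f i j by [].
rewrite eA eL eR.
case/andP: (hij) => /andP [hi1 hi2] /andP [hj1 hj2].
have hpi := part_le_lam1 hp (i := i) (ltac:(apply/andP; split; lia)).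
case: (boolP ((k \in Llabels la) && (k.+1 \in Rlabels la))) => hm.
- case/andP: hm => hkL hkR.
  case: (B_facts hp hkL hkR) => /andP [hb1 hb2] hb3 hb4 hb5 hb6.
  have hg : forall u : vtx n, rep la (addk la k a f) u.1 u.2 =
      rep la f u.1 u.2 + (if u == vk n k then a else 0).
    move=> u; rewrite rep_addk hkL hkR !andbT.
    congr (_ + (if _ then _ else _)).
    apply/idP/idP.
      by case/andP => /eqP e1 /eqP e2; rewrite (vtx_eq hk e1 e2).
    by move/eqP ->; rewrite (vk1 hk) (vk2 hk) !eqxx.
  case: (eqVneq kk k) => ekk.
  + rewrite (GK_part_ext _ _ (g2 := fun u : vtx n => rep la f u.1 u.2 + (if u == vk n k then a else 0))); last by move=> u _; apply: hg.
    have hext : ext_prop (ARk_vert k) (ARk_edge c k) (vk n k).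
      case: hcf => h.
        exact: (ext_AR_source hc hk (initial_pres hc hk h)).
      exact: (ext_AR_sink hc hk (final_pres hc hk h)).
    rewrite ekk GK_part_add //; last by rewrite /d addn1.
    + have hd1 : (d == 1) = (i == rowof la k) && (j == colof la k.+1).
        rewrite /d ekk (delta_B hp hkL hkR).
        case: (diag_box hp hkL hkR hij ekk) => [/andP [/eqP -> /eqP ->]|hlt].
          by rewrite subnn !eqxx.
        apply/idP/idP; first lia.
        by case/andP => /eqP ei /eqP ej; move: hlt; rewrite ei ej ltnn.
      by rewrite hd1; case: ifP; rewrite ?addn0.
    + exact: vk_vert hk.
  + rewrite (GK_part_ext _ _ (g2 := fun u : vtx n => rep la f u.1 u.2)); last first.
      move=> u hu; rewrite hg.
      have : u != vk n k.
        apply/eqP => e; move: hu; rewrite e /ARk_vert (vk1 hk) (vk2 hk) => /and4P [_ h1 h2 _].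
        by move/eqP: ekk => ekk; lia.
      by move/negbTE ->; rewrite addn0.
    have -> : (i == rowof la k) && (j == colof la k.+1) = false.
      apply/negbTE/andP => [[/eqP ei /eqP ej]]; move: ekk.
      by rewrite /kk /diag ei ej hb6 eqxx.
    by [].
- rewrite (GK_part_ext _ _ (g2 := fun u : vtx n => rep la f u.1 u.2)); last first.
    move=> u _; rewrite rep_addk; case: ifP => [/and4P [_ _ h1 h2]|_].
      by move: hm; rewrite h1 h2.
    by rewrite addn0.
  have -> : (i == rowof la k) && (j == colof la k.+1) = false.
    apply/negbTE/andP => [[/eqP ei /eqP ej]].
    case: (boolP (k \in Llabels la)) => hkL.
      have hkR : k.+1 \notin Rlabels la by move: hm; rewrite hkL.
      by move: ej; rewrite (colof_notin hkR); lia.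
    by move: ei; rewrite (rowof_notin hkL); lia.
  by [].
Qed.
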